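(* Let $\mathcal H$ be an abelian category in which subobjects of projective objects are projective, and let $\mathcal T\subseteq\mathcal H$ be a covariantly finite full subcategory consisting of projective objects, closed under finite direct sums and direct summands. The following are equivalent: (1) $\underline{\mathcal H}=\mathcal H/\langle\mathcal T\rangle$ is balanced; (2) ${}^\perp\mathcal T$ is closed under subobjects; (3) $({}^\perp\mathcal T,\operatorname{Sub}(\mathcal T))$ is a hereditary (split) torsion theory in $\mathcal H$. If moreover $\mathcal T$ is contravariantly finite, these are equivalent to: (4) $\underline{\mathcal H}$ is weakly balanced. If $\mathcal H$ has enough injectives, (1)–(3) are equivalent to: (5) for every $T\in\mathcal T$ there is a monomorphism $T\rightarrowtail E$ with $E\in\mathcal T$ an injective object of $\mathcal H$.
   Context: $\underline{\mathcal H}$ is the stable category (same objects, morphisms modulo those factoring through an object of $\mathcal T$). Balanced: every morphism that is both mono and epi is an isomorphism. When $\mathcal T$ is functorially finite, $\underline{\mathcal H}$ is pretriangulated (left triangles $\Omega Y\to Z\to X\xrightarrow{\overline f}Y$ with $\Omega Y=\ker$ of a $\mathcal T$-precover $p_Y$ and $Z$ the pullback of $f$ and $p_Y$; right triangles $X\xrightarrow{\overline f}Y\to W\to\Sigma X$ with $\Sigma X=\operatorname{cok}$ of a $\mathcal T$-preenvelope $\mu^X$ and $W$ the pushout of $f$ and $\mu^X$); $\overline f$ is a strong mono if there is a left triangle $\Omega Y\to0\to X\xrightarrow{\overline f}Y$, a strong epi if there is a right triangle $X\xrightarrow{\overline f}Y\to0\to\Sigma X$, and $\underline{\mathcal H}$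 is weakly balanced if every strong mono that is a strong epi is an isomorphism. $\operatorname{Sub}(\mathcal T)$: objects isomorphic to subobjects of objects of $\mathcal T$; ${}^\perp\mathcal T=\{X:\mathcal H(X,T)=0\ \forall T\in\mathcal T\}$. A torsion theory $(\mathcal U,\mathcal V)$: $\mathcal U^\perp=\mathcal V$, $\mathcal U={}^\perp\mathcal V$, and $\mathcal U\hookrightarrow\mathcal H$ has a right adjoint; it is hereditary if $\mathcal U$ is closed under subobjects, split if every object is a direct sum of an object of $\mathcal U$ and one of $\mathcal V$. *)

(* Defs.v *)
From HB Require Import structures.
From mathcomp Require Import all_boot all_algebra.
Set Implicit Arguments. Unset Strict Implicit. Unset Printing Implicit Defensive.
Import GRing.Theory.
Local Open Scope ring_scope.

Record PreCat := PreCatMk {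
  Obj : Type;
  Mor : Obj -> Obj -> zmodType;
  comp : forall X Y Z : Obj, Mor Y Z -> Mor X Y -> Mor X Z;  (* comp g f = g o f *)
  idm : forall X : Obj, Mor X X
}.
Arguments comp {p X Y Z} _ _.
Arguments idm {p} X.
Arguments Mor {p} X Y.

Section CatDefs.
Variable C : PreCat.
Notation Obj := (Obj C).

Definition mono {X Y : Obj} (f : Mor X Y) : Prop :=
  forall W (g h : Mor W X), comp f g = comp f h -> g = h.
Definition epi {X Y : Obj} (f : Mor X Y) : Prop :=
  forall W (g h : Mor Y W), comp g f = comp h f -> g = h.

Definition is_kernel {K X Y : Obj} (k : Mor K X) (f : Mor X Y) : Prop :=
  comp f k = 0 /\
  forall W (g : Mor W X), comp f g = 0 ->
    exists h : Mor W K, comp k h = g /\ forall h', comp k h' = g -> h' = h.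
Definition is_cokernel {X Y Q : Obj} (q : Mor Y Q) (f : Mor X Y) : Prop :=
  comp q f = 0 /\
  forall W (g : Mor Y W), comp g f = 0 ->
    exists h : Mor Q W, comp h q = g /\ forall h', comp h' q = g -> h' = h.

Definition is_biprod {A B P : Obj} (i1 : Mor A P) (i2 : Mor B P)
    (p1 : Mor P A) (p2 : Mor P B) : Prop :=
  [/\ comp p1 i1 = idm A, comp p2 i2 = idm B, comp p1 i2 = 0, comp p2 i1 = 0
    & comp i1 p1 + comp i2 p2 = idm P].

Definition is_pullback {X Y E Z : Obj} (f : Mor X Y) (g : Mor E Y)
    (z1 : Mor Z X) (z2 : Mor Z E) : Prop :=
  comp f z1 = comp g z2 /\
  forall W (a : Mor W X) (b : Mor W E), comp f a = comp g b ->
    exists h : Mor W Z, (comp z1 h = a /\ comp z2 h = b) /\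
      forall h', comp z1 h' = a /\ comp z2 h' = b -> h' = h.

Definition is_pushout {X Y E W : Obj} (f : Mor X Y) (g : Mor X E)
    (w1 : Mor Y W) (w2 : Mor E W) : Prop :=
  comp w1 f = comp w2 g /\
  forall V (a : Mor Y V) (b : Mor E V), comp a f = comp b g ->
    exists h : Mor W V, (comp h w1 = a /\ comp h w2 = b) /\
      forall h', comp h' w1 = a /\ comp h' w2 = b -> h' = h.

Definition projective (P : Obj) : Prop :=
  forall X Y (e : Mor X Y) (g : Mor P Y), epi e -> exists h : Mor P X, comp e h = g.
Definition injective (I : Obj) : Prop :=
  forall X Y (m : Mor X Y) (g : Mor X I), mono m -> exists h : Mor Y I, comp h m = g.

Definition enough_injectives : Prop :=
  forall X : Obj, exists I (m : Mor X I), injective I /\ mono m.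
End CatDefs.

Record is_abelian (C : PreCat) : Prop := {
  comp_assoc : forall (W X Y Z : Obj C) (h : Mor Y Z) (g : Mor X Y) (f : Mor W X),
      comp h (comp g f) = comp (comp h g) f;
  comp_id_l : forall (X Y : Obj C) (f : Mor X Y), comp (idm Y) f = f;
  comp_id_r : forall (X Y : Obj C) (f : Mor X Y), comp f (idm X) = f;
  comp_addl : forall (X Y Z : Obj C) (g1 g2 : Mor Y Z) (f : Mor X Y),
      comp (g1 + g2) f = comp g1 f + comp g2 f;
  comp_addr : forall (X Y Z : Obj C) (g : Mor Y Z) (f1 f2 : Mor X Y),
      comp g (f1 + f2) = comp g f1 + comp g f2;
  has_zero_obj : exists Z : Obj C, idm Z = 0;
  has_biprods : forall A B : Obj C, exists (P : Obj C) (i1 : Mor A P) (i2 : Mor B P)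
      (p1 : Mor P A) (p2 : Mor P B), is_biprod i1 i2 p1 p2;
  has_kernels : forall (X Y : Obj C) (f : Mor X Y),
      exists (K : Obj C) (k : Mor K X), is_kernel k f;
  has_cokernels : forall (X Y : Obj C) (f : Mor X Y),
      exists (Q : Obj C) (q : Mor Y Q), is_cokernel q f;
  mono_normal : forall (X Y : Obj C) (m : Mor X Y), mono m ->
      exists (Z : Obj C) (g : Mor Y Z), is_kernel m g;
  epi_normal : forall (X Y : Obj C) (e : Mor X Y), epi e ->
      exists (Z : Obj C) (g : Mor Z X), is_cokernel e g
}.

Section SubcatDefs.
Variable C : PreCat.
Notation Obj := (Obj C).
(* A full subcategory is given by a predicate on objects. *)
Variable T : Obj -> Prop.

Definition closed_finite_sums : Prop :=
  (forall Z : Obj, idm Z = 0 -> T Z) /\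
  (forall A B P (i1 : Mor A P) (i2 : Mor B P) (p1 : Mor P A) (p2 : Mor P B),
      is_biprod i1 i2 p1 p2 -> T A -> T B -> T P).

Definition closed_summands : Prop :=
  forall X Y (s : Mor Y X) (r : Mor X Y), comp r s = idm Y -> T X -> T Y.

Definition T_preenvelope {X E : Obj} (mu : Mor X E) : Prop :=
  T E /\ forall E' (g : Mor X E'), T E' -> exists h : Mor E E', comp h mu = g.
Definition T_precover {E Y : Obj} (p : Mor E Y) : Prop :=
  T E /\ forall E' (g : Mor E' Y), T E' -> exists h : Mor E' E, comp p h = g.

Definition covariantly_finite : Prop :=
  forall X : Obj, exists E (mu : Mor X E), T_preenvelope mu.
Definition contravariantly_finite : Prop :=
  forall Y : Obj, exists E (p : Mor E Y), T_precover p.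

(* ---- The stable category H/<T>: same objects, morphisms modulo those
   factoring through an object of T.  We work with representatives. *)
Definition factors_through_T {X Y : Obj} (f : Mor X Y) : Prop :=
  exists E (a : Mor X E) (b : Mor E Y), T E /\ f = comp b a.
Definition stable_eq {X Y : Obj} (f g : Mor X Y) : Prop :=
  factors_through_T (f - g).

Definition stable_mono {X Y : Obj} (f : Mor X Y) : Prop :=
  forall W (g h : Mor W X), stable_eq (comp f g) (comp f h) -> stable_eq g h.
Definition stable_epi {X Y : Obj} (f : Mor X Y) : Prop :=
  forall W (g h : Mor Y W), stable_eq (comp g f) (comp h f) -> stable_eq g h.
Definition stable_iso {X Y : Obj} (f : Mor X Y) : Prop :=
  exists g : Mor Y X, stable_eq (comp g f) (idm X) /\ stable_eq (comp f g) (idm Y).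
Definition stable_zero (Z : Obj) : Prop := stable_eq (idm Z) 0.

Definition stable_balanced : Prop :=
  forall X Y (f : Mor X Y), stable_mono f -> stable_epi f -> stable_iso f.

(* Strong mono: there is a left triangle  Omega Y -> 0 -> X -> Y, i.e. the
   pullback Z of f along a T-precover p_Y is zero in the stable category. *)
Definition strong_mono {X Y : Obj} (f : Mor X Y) : Prop :=
  exists E (p : Mor E Y) Z (z1 : Mor Z X) (z2 : Mor Z E),
    T_precover p /\ is_pullback f p z1 z2 /\ stable_zero Z.
(* Strong epi: there is a right triangle X -> Y -> 0 -> Sigma X, i.e. the
   pushout W of f along a T-preenvelope mu^X is zero in the stable category. *)
Definition strong_epi {X Y : Obj} (f : Mor X Y) : Prop :=
  exists E (mu : Mor X E) W (w1 : Mor Y W) (w2 : Mor E W),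
    T_preenvelope mu /\ is_pushout f mu w1 w2 /\ stable_zero W.

Definition weakly_balanced : Prop :=
  forall X Y (f : Mor X Y), strong_mono f -> strong_epi f -> stable_iso f.

Definition perpT (X : Obj) : Prop := forall E (f : Mor X E), T E -> f = 0.
Definition SubT (X : Obj) : Prop := exists E (m : Mor X E), T E /\ mono m.

Definition injective_mono_hull_in_T : Prop :=
  forall E : Obj, T E -> exists E' (m : Mor E E'), T E' /\ injective E' /\ mono m.
End SubcatDefs.

Section TorsionDefs.
Variable C : PreCat.
Notation Obj := (Obj C).

Definition closed_subobjects (U : Obj -> Prop) : Prop :=
  forall X Y (m : Mor X Y), mono m -> U Y -> U X.

(* (U, V) is a torsion theory: U^perp = V, U = ^perp V, and the inclusion
   U -> H has a right adjoint (every X has a U-coreflection). *)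
Definition torsion_theory (U V : Obj -> Prop) : Prop :=
  [/\ (forall Y, V Y <-> forall X (f : Mor X Y), U X -> f = 0),
      (forall X, U X <-> forall Y (f : Mor X Y), V Y -> f = 0)
    & (forall X : Obj, exists UX (eps : Mor UX X), U UX /\
         forall U' (g : Mor U' X), U U' ->
           exists h : Mor U' UX, comp eps h = g /\
             forall h', comp eps h' = g -> h' = h)].

Definition hereditary_torsion_theory (U V : Obj -> Prop) : Prop :=
  torsion_theory U V /\ closed_subobjects U.

Definition split_torsion_theory (U V : Obj -> Prop) : Prop :=
  torsion_theory U V /\
  forall X : Obj, exists A B (i1 : Mor A X) (i2 : Mor B X) (p1 : Mor X A) (p2 : Mor X B),
    U A /\ V B /\ is_biprod i1 i2 p1 p2.
End TorsionDefs.

(* Main.v *)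
Require Import Defs.
From mathcomp Require Import all_boot all_algebra.
From Stdlib Require Classical_Prop.
Set Implicit Arguments. Unset Strict Implicit. Unset Printing Implicit Defensive.
Import GRing.Theory.
Local Open Scope ring_scope.

Section Basic.
Variable C : PreCat.
Variable HC : is_abelian C.
Notation "g ⊚ f" := (Defs.comp g f) (at level 40, left associativity).

Lemma cA (W X Y Z : Obj C) (h : Mor Y Z) (g : Mor X Y) (f : Mor W X) :
  h ⊚ (g ⊚ f) = h ⊚ g ⊚ f.
Proof. by rewrite (comp_assoc HC). Qed.
Lemma c1l (X Y : Obj C) (f : Mor X Y) : idm Y ⊚ f = f.
Proof. by rewrite (comp_id_l HC). Qed.
Lemma c1r (X Y : Obj C) (f : Mor X Y) : f ⊚ idm X = f.
Proof. by rewrite (comp_id_r HC). Qed.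
Lemma cDl (X Y Z : Obj C) (g1 g2 : Mor Y Z) (f : Mor X Y) :
  (g1 + g2) ⊚ f = g1 ⊚ f + g2 ⊚ f.
Proof. by rewrite (comp_addl HC). Qed.
Lemma cDr (X Y Z : Obj C) (g : Mor Y Z) (f1 f2 : Mor X Y) :
  g ⊚ (f1 + f2) = g ⊚ f1 + g ⊚ f2.
Proof. by rewrite (comp_addr HC). Qed.
Lemma c0l (X Y Z : Obj C) (f : Mor X Y) : (0 : Mor Y Z) ⊚ f = 0.
Proof.
have := cDl (0 : Mor Y Z) 0 f. rewrite addr0 => /eqP.
by rewrite -subr_eq subrr eq_sym => /eqP.
Qed.
Lemma c0r (X Y Z : Obj C) (g : Mor Y Z) : g ⊚ (0 : Mor X Y) = 0.
Proof.
have := cDr g (0 : Mor X Y) 0. rewrite addr0 => /eqP.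
by rewrite -subr_eq subrr eq_sym => /eqP.
Qed.
Lemma cNl (X Y Z : Obj C) (g : Mor Y Z) (f : Mor X Y) : (- g) ⊚ f = - (g ⊚ f).
Proof. apply/eqP; rewrite -addr_eq0 -cDl addNr; exact/eqP/c0l. Qed.
Lemma cNr (X Y Z : Obj C) (g : Mor Y Z) (f : Mor X Y) : g ⊚ (- f) = - (g ⊚ f).
Proof. apply/eqP; rewrite -addr_eq0 -cDr addNr; exact/eqP/c0r. Qed.
Lemma cBl (X Y Z : Obj C) (g1 g2 : Mor Y Z) (f : Mor X Y) :
  (g1 - g2) ⊚ f = g1 ⊚ f - g2 ⊚ f.
Proof. by rewrite cDl cNl. Qed.
Lemma cBr (X Y Z : Obj C) (g : Mor Y Z) (f1 f2 : Mor X Y) :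
  g ⊚ (f1 - f2) = g ⊚ f1 - g ⊚ f2.
Proof. by rewrite cDr cNr. Qed.

Lemma monoP (X Y : Obj C) (m : Mor X Y) :
  (forall W (g : Mor W X), m ⊚ g = 0 -> g = 0) -> mono m.
Proof.
move=> H W g h e; apply/eqP; rewrite -subr_eq0; apply/eqP/H.
by rewrite cBr e subrr.
Qed.
Lemma mono0 (X Y : Obj C) (m : Mor X Y) : mono m ->
  forall W (g : Mor W X), m ⊚ g = 0 -> g = 0.
Proof. by move=> H W g e; apply: H; rewrite e c0r. Qed.
Lemma epiP (X Y : Obj C) (e : Mor X Y) :
  (forall W (g : Mor Y W), g ⊚ e = 0 -> g = 0) -> epi e.
Proof.
move=> H W g h E; apply/eqP; rewrite -subr_eq0; apply/eqP/H.
by rewrite cBl E subrr.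
Qed.
Lemma epi0 (X Y : Obj C) (e : Mor X Y) : epi e ->
  forall W (g : Mor Y W), g ⊚ e = 0 -> g = 0.
Proof. by move=> H W g E; apply: H; rewrite E c0l. Qed.

Lemma ker_mono (K X Y : Obj C) (k : Mor K X) (f : Mor X Y) :
  is_kernel k f -> mono k.
Proof.
move=> [k0 H]; apply: monoP => W g e.
have e' : f ⊚ (k ⊚ g) = 0 by rewrite cA k0 c0l.
have [h [_ U]] := H W (k ⊚ g) e'.
by rewrite (U g erefl) (U 0) ?c0r.
Qed.
Lemma coker_epi (X Y Q : Obj C) (q : Mor Y Q) (f : Mor X Y) :
  is_cokernel q f -> epi q.
Proof.
move=> [q0 H]; apply: epiP => W g e.
have e' : g ⊚ q ⊚ f = 0 by rewrite -cA q0 c0r.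
have [h [_ U]] := H W (g ⊚ q) e'.
by rewrite (U g erefl) (U 0) ?c0l.
Qed.
Lemma mono_comp (X Y Z : Obj C) (g : Mor Y Z) (f : Mor X Y) :
  mono g -> mono f -> mono (g ⊚ f).
Proof. by move=> Hg Hf W a b; rewrite -!cA; move=> /Hg /Hf. Qed.
Lemma epi_comp (X Y Z : Obj C) (g : Mor Y Z) (f : Mor X Y) :
  epi g -> epi f -> epi (g ⊚ f).
Proof. by move=> Hg Hf W a b; rewrite !cA; move=> /Hf /Hg. Qed.
Lemma split_epi (X Y : Obj C) (e : Mor X Y) (s : Mor Y X) :
  e ⊚ s = idm Y -> epi e.
Proof.
move=> H W a b E; by rewrite -(c1r a) -(c1r b) -H !cA E.
Qed.
Lemma split_mono (X Y : Obj C) (m : Mor X Y) (r : Mor Y X) :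
  r ⊚ m = idm X -> mono m.
Proof.
move=> H W a b E; by rewrite -(c1l a) -(c1l b) -H -!cA E.
Qed.

Lemma mono_coker_fact (X Y Q : Obj C) (v : Mor X Y) (p : Mor Y Q) :
  mono v -> is_cokernel p v ->
  forall W (x : Mor W Y), p ⊚ x = 0 -> exists t : Mor W X, x = v ⊚ t.
Proof.
move=> Hv [p0 Hp] W x px.
have [Z [g [g0 Hg]]] := mono_normal HC Hv.
have [h [hp _]] := Hp Z g g0.
have e' : g ⊚ x = 0 by rewrite -hp -cA px c0r.
have [t [vt _]] := Hg W x e'.
by exists t.
Qed.
Lemma epi_ker_fact (X Y K : Obj C) (e : Mor X Y) (k : Mor K X) :
  epi e -> is_kernel k e ->
  forall W (x : Mor X W), x ⊚ k = 0 -> exists t : Mor Y W, x = t ⊚ e.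
Proof.
move=> He [k0 Hk] W x xk.
have [Z [g [g0 Hg]]] := epi_normal HC He.
have [h [hk _]] := Hk Z g g0.
have e' : x ⊚ g = 0 by rewrite -hk cA xk c0l.
have [t [te _]] := Hg W x e'.
by exists t.
Qed.

Lemma zero_obj_from (Z X : Obj C) (f : Mor Z X) : idm Z = 0 -> f = 0.
Proof. by move=> H; rewrite -(c1r f) H c0r. Qed.
Lemma zero_obj_to (Z X : Obj C) (f : Mor X Z) : idm Z = 0 -> f = 0.
Proof. by move=> H; rewrite -(c1l f) H c0l. Qed.

End Basic.

Section TT.
Variable C : PreCat.
Variable HC : is_abelian C.
Notation "g ⊚ f" := (Defs.comp g f) (at level 40, left associativity).
Variable Hsubproj : forall (P X : Obj C) (m : Mor X P), projective P -> mono m -> projective X.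
Variable T : Obj C -> Prop.
Variable HTproj : forall X, T X -> projective X.
Variable HTsums : closed_finite_sums T.
Variable HTsummands : closed_summands T.
Variable HTcov : covariantly_finite T.

Let cA := cA HC. Let c1l := c1l HC. Let c1r := c1r HC. Let cDl := cDl HC.
Let cDr := cDr HC. Let c0l := c0l HC. Let c0r := c0r HC. Let cNl := cNl HC.
Let cNr := cNr HC. Let cBl := cBl HC. Let cBr := cBr HC.

Lemma T0 : exists Z : Obj C, idm Z = 0 /\ T Z.
Proof.
have [Z HZ] := has_zero_obj HC. exists Z; split; [exact: HZ | exact: HTsums.1].
Qed.

Lemma ftT0 (X Y : Obj C) : factors_through_T T (0 : Mor X Y).
Proof.
have [Z [HZ TZ]] := T0. exists Z, 0, 0; split => //; by rewrite c0l.
Qed.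

Lemma ftT_T (X E Y : Obj C) (a : Mor X E) (b : Mor E Y) : T E ->
  factors_through_T T (b ⊚ a).
Proof. by move=> TE; exists E, a, b. Qed.

Lemma ftT_l (X Y Z : Obj C) (f : Mor X Y) (g : Mor Y Z) :
  factors_through_T T f -> factors_through_T T (g ⊚ f).
Proof. move=> [E [a [b [TE ->]]]]; exists E, a, (g ⊚ b); split => //. Qed.
Lemma ftT_r (X Y Z : Obj C) (f : Mor X Y) (g : Mor Y Z) :
  factors_through_T T g -> factors_through_T T (g ⊚ f).
Proof. move=> [E [a [b [TE ->]]]]; exists E, (a ⊚ f), b; split => //. Qed.
Lemma ftT_N (X Y : Obj C) (f : Mor X Y) :
  factors_through_T T f -> factors_through_T T (- f).
Proof. move=> [E [a [b [TE ->]]]]; exists E, a, (- b); split => //; by rewrite cNl. Qed.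

Lemma biprod_expand (A B P X Y : Obj C) (i1 : Mor A P) (i2 : Mor B P)
  (p1 : Mor P A) (p2 : Mor P B) (a : Mor X A) (c : Mor X B) (b : Mor A Y) (d : Mor B Y) :
  is_biprod i1 i2 p1 p2 -> (b ⊚ p1 + d ⊚ p2) ⊚ (i1 ⊚ a + i2 ⊚ c) = b ⊚ a + d ⊚ c.
Proof.
case=> h11 h22 h12 h21 _.
rewrite cDl !cDr -!cA ![p1 ⊚ (_ ⊚ _)]cA ![p2 ⊚ (_ ⊚ _)]cA h11 h22 h12 h21.
by rewrite !c0l !c0r !c1l addr0 add0r.
Qed.

Lemma ftT_D (X Y : Obj C) (f g : Mor X Y) :
  factors_through_T T f -> factors_through_T T g -> factors_through_T T (f + g).
Proof.
move=> [E [a [b [TE ->]]]] [E' [c [d [TE' ->]]]].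
have [P [i1 [i2 [p1 [p2 Hb]]]]] := has_biprods HC E E'.
exists P, (i1 ⊚ a + i2 ⊚ c), (b ⊚ p1 + d ⊚ p2); split.
  exact: HTsums.2 Hb TE TE'.
by rewrite (biprod_expand _ _ _ _ Hb).
Qed.

Lemma ftT_B (X Y : Obj C) (f g : Mor X Y) :
  factors_through_T T f -> factors_through_T T g -> factors_through_T T (f - g).
Proof. by move=> Hf Hg; apply: ftT_D => //; apply: ftT_N. Qed.

Lemma perp_ftT (X Y : Obj C) (f : Mor X Y) : perpT T X ->
  factors_through_T T f -> f = 0.
Proof. by move=> HX [E [a [b [TE ->]]]]; rewrite (HX E a TE) c0r. Qed.

Lemma stable_eq0 (X Y : Obj C) (f : Mor X Y) :
  stable_eq T f 0 <-> factors_through_T T f.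
Proof. by rewrite /stable_eq subr0. Qed.

Lemma proj_lift (P X Y : Obj C) (e : Mor X Y) (g : Mor P Y) :
  T P -> epi e -> exists h : Mor P X, e ⊚ h = g.
Proof. by move=> TP He; apply: (HTproj TP). Qed.

Lemma coim_mono (X E K Q : Obj C) (mu : Mor X E) (k : Mor K X) (q : Mor X Q) (m : Mor Q E) :
  is_kernel k mu -> is_cokernel q k -> mu = m ⊚ q -> mono m.
Proof.
move=> Hk Hq Hmu; apply: (monoP HC) => W g mg.
have [C' [c' Hc']] := has_cokernels HC g.
have [m' [Hm' _]] := Hc'.2 E m mg.
have Hcq : epi (c' ⊚ q) := epi_comp HC (coker_epi HC Hc') (coker_epi HC Hq).
have [Z [h Hh]] := epi_normal HC Hcq.
have muh : mu ⊚ h = 0.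
  by rewrite Hmu -Hm' -!cA (cA c') Hh.1 c0r.
have [h' [kh' _]] := Hk.2 Z h muh.
have qh : q ⊚ h = 0 by rewrite -kh' cA Hq.1 c0l.
have [t [tq _]] := Hh.2 Q q qh.
have tc : t ⊚ c' = idm Q.
  apply: (coker_epi HC Hq); by rewrite c1l -cA.
by rewrite -(c1l g) -tc -cA Hc'.1 c0r.
Qed.

Lemma decomp (X : Obj C) : exists (K Q E : Obj C) (k : Mor K X) (s : Mor Q X)
  (r : Mor X K) (q : Mor X Q) (m : Mor Q E),
  [/\ is_biprod k s r q, perpT T K, projective Q, T E & mono m].
Proof.
have [E [mu [TE Hmu]]] := HTcov X.
have [K [k Hk]] := has_kernels HC mu.
have [Q [q Hq]] := has_cokernels HC k.
have [m [Hm _]] := Hq.2 E mu Hk.1.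
have mm : mono m := coim_mono Hk Hq (esym Hm).
have PQ : projective Q := Hsubproj (HTproj TE) mm.
have [s qs] := PQ X Q q (idm Q) (coker_epi HC Hq).
have e1 : mu ⊚ (idm X - s ⊚ q) = 0.
  by rewrite cBr c1r -Hm -!cA (cA q) qs c1l subrr.
have [r [kr _]] := Hk.2 X _ e1.
have km : mono k := ker_mono HC Hk.
have rk : r ⊚ k = idm K.
  apply: km; by rewrite cA kr cBl c1l c1r -cA Hq.1 c0r subr0.
have rs : r ⊚ s = 0.
  apply: (mono0 HC km); by rewrite cA kr cBl c1l -cA qs c1r subrr.
exists K, Q, E, k, s, r, q, m; split => //.
- split => //. exact: Hq.1. by rewrite kr subrK.
- move=> E' g TE'. have [h hmu] := Hmu E' (g ⊚ r) TE'.
  by rewrite -(c1r g) -rk cA -hmu -cA Hk.1 c0r.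
Qed.


Lemma perp_SubT (X Y : Obj C) (f : Mor X Y) : perpT T X -> SubT T Y -> f = 0.
Proof.
move=> HX [E [n [TE nm]]]. apply: (mono0 HC nm). exact: HX E (n ⊚ f) TE.
Qed.

Lemma tt_always : torsion_theory (perpT T) (SubT T).
Proof.
split.
- move=> Y; split; first by move=> HY X f HX; exact: perp_SubT.
  move=> H.
  have [K [Q [E [k [s [r [q [m [[rk qs rs qk kr] PK PQ TE mm]]]]]]]]] := decomp Y.
  have k0 : k = 0 := H K k PK.
  have sq : s ⊚ q = idm Y by rewrite -kr k0 c0l add0r.
  exists E, (m ⊚ q); split => //.
  apply: (mono_comp HC mm). exact: (@split_mono C HC _ _ q s sq).
- move=> X; split; first by move=> HX Y f HY; exact: perp_SubT.
  move=> H E f TE. apply: H. exists E, (idm E); split => //.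
  by move=> W g h; rewrite !c1l.
- move=> X.
  have [K [Q [E [k [s [r [q [m [[rk qs rs qk kr] PK PQ TE mm]]]]]]]]] := decomp X.
  exists K, k; split => // U' g HU.
  have qg : q ⊚ g = 0 by apply: (mono0 HC mm); exact: HU E (m ⊚ (q ⊚ g)) TE.
  exists (r ⊚ g); split.
    by rewrite cA -(c1l g) -{2}kr cDl -(cA s) qg c0r addr0 c1l.
  by move=> h' <-; rewrite cA rk c1l.
Qed.

Lemma split_always : forall X : Obj C, exists A B (i1 : Mor A X) (i2 : Mor B X)
  (p1 : Mor X A) (p2 : Mor X B), perpT T A /\ SubT T B /\ is_biprod i1 i2 p1 p2.
Proof.
move=> X.
have [K [Q [E [k [s [r [q [m [Hb PK PQ TE mm]]]]]]]]] := decomp X.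
exists K, Q, k, s, r, q; split => //; split => //. by exists E, m.
Qed.

Lemma two_three : closed_subobjects (perpT T) <->
     (hereditary_torsion_theory (perpT T) (SubT T) /\
      split_torsion_theory (perpT T) (SubT T)).
Proof.
split; last by case=> [[]].
move=> H; split; split => //; [exact: tt_always | exact: tt_always | exact: split_always].
Qed.


Lemma two_one : closed_subobjects (perpT T) -> stable_balanced T.
Proof.
move=> H2 X Y f Hm He.
have [K [Q [E [k [s [r [q [m [[rk qs rs qk kr] PK PQ TE mm]]]]]]]]] := decomp X.
have [L [l Hl]] := has_kernels HC (f ⊚ k).
have km : mono k.
  by apply: (@split_mono C HC _ _ k r rk).
have PL : perpT T L := H2 L K l (ker_mono HC Hl) PK.
have kl0 : k ⊚ l = 0.
  apply: (perp_ftT PL); apply/stable_eq0; apply: Hm.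
  by rewrite /stable_eq cA Hl.1 c0r subr0; exact: ftT0.
have l0 : l = 0 by apply: (mono0 HC km).
have [B [i1 [i2 [p1 [p2 Hb]]]]] := has_biprods HC Y E.
case: (Hb) => h11 h22 h12 h21 hsum.
pose phi := i1 ⊚ f - i2 ⊚ (m ⊚ q).
have p1phi : p1 ⊚ phi = f by rewrite /phi cBr !cA h11 h12 c1l !c0l subr0.
have p2phi : p2 ⊚ phi = - (m ⊚ q) by rewrite /phi cBr !cA h21 h22 c1l c0l sub0r.
have phim : mono phi.
  apply: (monoP HC) => W x phix.
  have fx : f ⊚ x = 0 by rewrite -p1phi -cA phix c0r.
  have qx : q ⊚ x = 0.
    apply: (mono0 HC mm). apply/eqP; rewrite cA -oppr_eq0 -cNl -p2phi -cA phix c0r //.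
  have xe : x = k ⊚ (r ⊚ x) by rewrite cA -(c1l x) -{1}kr cDl -(cA s) qx c0r addr0 c1l.
  have fkr : f ⊚ k ⊚ (r ⊚ x) = 0 by rewrite -cA -xe.
  have [h [lh _]] := Hl.2 W (r ⊚ x) fkr.
  by rewrite xe -lh l0 c0l c0r.
have [W [c Hc]] := has_cokernels HC phi.
have cphi : c ⊚ i1 ⊚ f = c ⊚ i2 ⊚ (m ⊚ q).
  apply/eqP; rewrite -subr_eq0 -!cA -cBr; exact/eqP/Hc.1.
have st : stable_eq T (c ⊚ i1) 0.
  apply: He. rewrite /stable_eq c0l subr0 cphi. by apply: ftT_T.
have [E' [a [b [TE' ab]]]] := st.
rewrite subr0 in ab.
have [be cbe] := @proj_lift _ _ _ c b TE' (coker_epi HC Hc).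
have e2 : c ⊚ (i1 - be ⊚ a) = 0 by rewrite cBr cA cbe ab subrr.
have [t Et] := mono_coker_fact HC phim Hc e2.
have ft : f ⊚ t = idm Y - p1 ⊚ be ⊚ a.
  have := congr1 (fun z => p1 ⊚ z) Et => /=.
  by rewrite cBr h11 cA cA p1phi => <-.
exists t; split.
- apply: Hm. rewrite /stable_eq c1r cA ft cBl c1l.
  have -> : f - p1 ⊚ be ⊚ a ⊚ f - f = - (p1 ⊚ be) ⊚ (a ⊚ f).
    by rewrite cNl cA addrAC subrr add0r.
  by apply: ftT_T.
- rewrite /stable_eq ft.
  have -> : idm Y - p1 ⊚ be ⊚ a - idm Y = - (p1 ⊚ be) ⊚ a.
    by rewrite cNl addrAC subrr add0r.
  by apply: ftT_T.
Qed.


Lemma lemR (X E : Obj C) (f : Mor X E) : T E -> f <> 0 ->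
  exists (E1 : Obj C) (mu1 : Mor X E1), [/\ T E1, mu1 <> 0 &
    forall E'' (h : Mor E1 E''), T E'' -> h ⊚ mu1 = 0 -> h = 0].
Proof.
move=> TE f0.
have [Cc [c Hc]] := has_cokernels HC f.
have [K [Q [E0 [k [s [r [q [m [[rk qs rs qk kr] PK PQ TE0 mm]]]]]]]]] := decomp Cc.
have epie : epi (q ⊚ c).
  apply: (epi_comp HC) (coker_epi HC Hc). exact: (@split_epi C HC _ _ q s qs).
have [sg esg] := PQ E Q (q ⊚ c) (idm Q) epie.
have [E1 [k1 Hk1]] := has_kernels HC (q ⊚ c).
have e1 : q ⊚ c ⊚ (idm E - sg ⊚ (q ⊚ c)) = 0.
  by rewrite cBr c1r cA esg c1l subrr.
have [rho [krho _]] := Hk1.2 E _ e1.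
have k1m : mono k1 := ker_mono HC Hk1.
have rk1 : rho ⊚ k1 = idm E1.
  apply: k1m; by rewrite cA krho cBl c1l c1r -cA Hk1.1 c0r subr0.
have TE1 : T E1 := HTsummands rk1 TE.
exists E1, (rho ⊚ f); split => //.
- move=> rf0; apply: f0.
  have : k1 ⊚ (rho ⊚ f) = 0 by rewrite rf0 c0r.
  by rewrite cA krho cBl c1l -!cA Hc.1 !c0r subr0.
- move=> E'' h TE'' hrf.
  have hrf' : h ⊚ rho ⊚ f = 0 by rewrite -cA.
  have [h'' [h''c _]] := Hc.2 E'' (h ⊚ rho) hrf'.
  have h''k : h'' ⊚ k = 0 := PK E'' _ TE''.
  have eh : h ⊚ rho = h'' ⊚ s ⊚ (q ⊚ c).
    have h''e : h'' = h'' ⊚ s ⊚ q.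
      by rewrite -{1}(c1r h'') -kr cDr cA h''k c0l add0r cA.
    by rewrite -h''c {1}h''e !cA.
  by rewrite -(c1r h) -rk1 cA eh -cA Hk1.1 c0r.
Qed.


Lemma lemN0 (X Y E : Obj C) (m : Mor X Y) (f : Mor X E) :
  mono m -> perpT T Y -> T E -> f <> 0 ->
  exists (P0 E1 : Obj C) (v : Mor E1 P0), [/\ perpT T P0, T E1, mono v & idm E1 <> 0].
Proof.
move=> mm PY TE f0.
have [E1 [mu1 [TE1 mu0 Hep]]] := lemR TE f0.
have [B [i1 [i2 [p1 [p2 Hb]]]]] := has_biprods HC Y E1.
case: (Hb) => h11 h22 h12 h21 hsum.
pose phi := i1 ⊚ m - i2 ⊚ mu1.
have p1phi : p1 ⊚ phi = m by rewrite /phi cBr !cA h11 h12 c1l !c0l subr0.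
have phim : mono phi.
  apply: (monoP HC) => W x phix. apply: (mono0 HC mm).
  by rewrite -p1phi -cA phix c0r.
have [P0 [c Hc]] := has_cokernels HC phi.
have cphi : c ⊚ i1 ⊚ m = c ⊚ i2 ⊚ mu1.
  apply/eqP; rewrite -subr_eq0 -!cA -cBr; exact/eqP/Hc.1.
exists P0, E1, (c ⊚ i2); split => //.
- move=> E'' h TE''.
  have h1 : h ⊚ c ⊚ i1 = 0 := PY E'' _ TE''.
  have h2 : h ⊚ c ⊚ i2 = 0.
    apply: (Hep E'' _ TE''). by rewrite -!cA (cA c) -cphi !cA h1 c0l.
  apply: (epi0 HC (coker_epi HC Hc)).
  by rewrite -(c1r (h ⊚ c)) -hsum cDr !cA h1 h2 !c0l addr0.
- apply: (monoP HC) => W x vx.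
  have vx' : c ⊚ (i2 ⊚ x) = 0 by rewrite cA.
  have [t Et] := mono_coker_fact HC phim Hc vx'.
  have t0 : t = 0.
    apply: (mono0 HC mm). rewrite -p1phi -cA -Et cA h12 c0l //.
  by rewrite -(c1l x) -h22 -cA Et t0 !c0r.
- move=> E0; apply: mu0. by rewrite -(c1l mu1) E0 c0l.
Qed.

Section Bad.
Variables (P0 E : Obj C) (v : Mor E P0).
Hypotheses (PP0 : perpT T P0) (TE : T E) (vm : mono v) (E0 : idm E <> 0).
Variables (D : Obj C) (p : Mor P0 D) (Hp : is_cokernel p v).

Lemma bad_not_iso : ~ stable_iso T p.
Proof.
move=> [g [H1 _]].
have gp : g ⊚ p = idm P0.
  by apply/eqP; rewrite -subr_eq0; apply/eqP; apply: (perp_ftT PP0).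
apply: E0. apply: vm. by rewrite c1r c0r -(c1l v) -gp -cA Hp.1 c0r.
Qed.

Lemma bad_epi : stable_epi T p.
Proof.
move=> W g h H. rewrite /stable_eq.
have -> : g - h = 0.
  apply: (epi0 HC (coker_epi HC Hp)). rewrite cBl. exact: (perp_ftT PP0).
exact: ftT0.
Qed.

Lemma bad_mono : stable_mono T p.
Proof.
move=> W g h [E' [a [b [TE' ab]]]].
have [b' pb'] := @proj_lift _ _ _ p b TE' (coker_epi HC Hp).
have e : p ⊚ (g - h - b' ⊚ a) = 0 by rewrite !cBr cA pb' -ab subrr.
have [t Et] := mono_coker_fact HC vm Hp e.
rewrite /stable_eq.
have -> : g - h = b' ⊚ a + v ⊚ t by rewrite -Et [b' ⊚ a + _]addrC subrK.
by apply: ftT_D; apply: ftT_T.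
Qed.

Lemma bad_not_balanced : ~ stable_balanced T.
Proof. by move=> H; apply: bad_not_iso; apply: H; [exact: bad_mono | exact: bad_epi]. Qed.

Lemma bad_strong_epi : strong_epi T p.
Proof.
have [Z [HZ TZ]] := T0.
exists Z, 0, Z, 0, 0; split; last split.
- split => // E' g TE'. exists 0. rewrite c0l; symmetry; exact: PP0 TE'.
- split; first by rewrite !c0l.
  move=> V a b ab. exists 0; split.
    have b0 : b = 0 := zero_obj_from HC b HZ.
    rewrite c0r in ab.
    rewrite !c0l b0; split => //; symmetry; exact: (epi0 HC (coker_epi HC Hp) ab).
  move=> h' _. exact: (zero_obj_from HC h' HZ).
- by rewrite /stable_zero /stable_eq subr0 HZ; exact: ftT0.
Qed.

Lemma bad_strong_mono : contravariantly_finite T -> strong_mono T p.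
Proof.
move=> Hcf.
have [E' [pi [TE' Hpi]]] := Hcf D.
have [lam plam] := @proj_lift _ _ _ p pi TE' (coker_epi HC Hp).
have [Z [b1 [b2 [a1 [a2 Hb]]]]] := has_biprods HC E E'.
case: (Hb) => h11 h22 h12 h21 hsum.
have TZ : T Z := HTsums.2 _ _ _ _ _ _ _ Hb TE TE'.
exists E', pi, Z, (v ⊚ a1 + lam ⊚ a2), a2; split => //; split.
- split.
    by rewrite cDr !cA Hp.1 plam c0l add0r.
  move=> W al be Hab.
  have e : p ⊚ (al - lam ⊚ be) = 0 by rewrite cBr cA plam Hab subrr.
  have [ga Ega] := mono_coker_fact HC vm Hp e.
  exists (b1 ⊚ ga + b2 ⊚ be); split.
    split.
      rewrite cDl !cDr -!cA ![a1 ⊚ (_ ⊚ _)]cA ![a2 ⊚ (_ ⊚ _)]cA h11 h12 h21 h22.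
      by rewrite !c0l !c0r !c1l addr0 add0r -Ega subrK.
    by rewrite cDr !cA h21 h22 c0l c1l add0r.
  move=> h' [z1h z2h].
  have a1h : a1 ⊚ h' = ga.
    apply: vm. rewrite -Ega -z1h -z2h cDl. rewrite -!cA addrK //.
  by rewrite -(c1l h') -hsum cDl -!cA a1h z2h.
- rewrite /stable_zero /stable_eq subr0 -(c1l (idm Z)). exact: ftT_T.
Qed.

Lemma bad_not_weakly : contravariantly_finite T -> ~ weakly_balanced T.
Proof.
move=> Hcf H; apply: bad_not_iso; apply: H.
  exact: bad_strong_mono. exact: bad_strong_epi.
Qed.

End Bad.


Lemma strong_epi_stable (X Y : Obj C) (f : Mor X Y) : strong_epi T f -> stable_epi T f.
Proof.
move=> [E [mu [W [w1 [w2 [[TE Hmu] [Hpo HW]]]]]]] Z g h [E' [a [b [TE' ab]]]].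
have [a' a'mu] := Hmu E' a TE'.
have e : (g - h) ⊚ f = b ⊚ a' ⊚ mu by rewrite cBl ab -a'mu cA.
have [w [[ww1 ww2] _]] := Hpo.2 Z _ _ e.
have HW' : factors_through_T T (idm W) by move: HW; rewrite /stable_zero /stable_eq subr0.
rewrite /stable_eq -ww1 -(c1l w1) cA.
exact: (ftT_r _ (ftT_l _ HW')).
Qed.

Lemma strong_mono_stable (X Y : Obj C) (f : Mor X Y) : strong_mono T f -> stable_mono T f.
Proof.
move=> [E [p [Z [z1 [z2 [[TE Hp] [Hpb HZ]]]]]]] W g h [E' [a [b [TE' ab]]]].
have [b' pb'] := Hp E' b TE'.
have e : f ⊚ (g - h) = p ⊚ (b' ⊚ a) by rewrite cBr ab cA pb'.
have [z [[z1z z2z] _]] := Hpb.2 W _ _ e.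
have HZ' : factors_through_T T (idm Z) by move: HZ; rewrite /stable_zero /stable_eq subr0.
rewrite /stable_eq -z1z -(c1r z1) -cA.
exact: (ftT_l _ (ftT_r _ HZ')).
Qed.

Lemma one_four : stable_balanced T -> weakly_balanced T.
Proof.
move=> H X Y f Hm He; apply: H.
  exact: strong_mono_stable. exact: strong_epi_stable.
Qed.

Lemma five_two : injective_mono_hull_in_T T -> closed_subobjects (perpT T).
Proof.
move=> H5 X Y m mm PY E g TE.
have [I [n [TI [II nm]]]] := H5 E TE.
have [h hm] := II X Y m (n ⊚ g) mm.
apply: (mono0 HC nm). by rewrite -hm (PY I h TI) c0l.
Qed.

Lemma two_five : enough_injectives C -> closed_subobjects (perpT T) ->
  injective_mono_hull_in_T T.
Proof.
move=> HEI H2 E TE.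
have [I [n [II nm]]] := HEI E.
have [K [Q [E0 [k [s [r [q [m [[rk qs rs qk kr] PK PQ TE0 mm]]]]]]]]] := decomp I.
have IQ : Defs.injective Q.
  move=> A B a g am. have [h ha] := II A B a (s ⊚ g) am.
  exists (q ⊚ h). by rewrite -cA ha cA qs c1l.
have [rho rhom] := IQ Q E0 m (idm Q) mm.
have TQ : T Q := HTsummands rhom TE0.
exists Q, (q ⊚ n); split => //; split => //.
have [L [l Hl]] := has_kernels HC (q ⊚ n).
have lm : mono l := ker_mono HC Hl.
have nl : n ⊚ l = k ⊚ (r ⊚ n ⊚ l).
  by rewrite -(c1l (n ⊚ l)) -kr cDl -!cA (cA q) Hl.1 c0r addr0.
have rnlm : mono (r ⊚ n ⊚ l).
  apply: (monoP HC) => W y e. apply: (mono0 HC (mono_comp HC nm lm)).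
  by rewrite nl -cA e c0r.
have PL : perpT T L := H2 L K _ rnlm PK.
have l0 : l = 0 := PL E l TE.
apply: (monoP HC) => W x e.
have [z [lz _]] := Hl.2 W x e.
by rewrite -lz l0 c0l.
Qed.


Lemma not2_bad : ~ closed_subobjects (perpT T) ->
  exists (P0 E1 : Obj C) (v : Mor E1 P0), [/\ perpT T P0, T E1, mono v & idm E1 <> 0].
Proof.
move=> N2. apply: Classical_Prop.NNPP => N. apply: N2.
move=> X Y m mm PY E f TE.
case: (Classical_Prop.classic (f = 0)) => // f0.
exfalso; apply: N. exact: (lemN0 mm PY TE f0).
Qed.

Lemma one_two : stable_balanced T -> closed_subobjects (perpT T).
Proof.
move=> H1. apply: Classical_Prop.NNPP => N2.
have [P0 [E1 [v [PP TE1 vm E10]]]] := not2_bad N2.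
have [D [p Hp]] := has_cokernels HC v.
exact: (bad_not_balanced PP TE1 vm E10 Hp H1).
Qed.

Lemma four_two : contravariantly_finite T -> weakly_balanced T -> closed_subobjects (perpT T).
Proof.
move=> Hcf H4. apply: Classical_Prop.NNPP => N2.
have [P0 [E1 [v [PP TE1 vm E10]]]] := not2_bad N2.
have [D [p Hp]] := has_cokernels HC v.
exact: (bad_not_weakly PP TE1 vm E10 Hp Hcf H4).
Qed.

Lemma main_sec :
  (stable_balanced T <-> closed_subobjects (perpT T)) /\
  (closed_subobjects (perpT T) <->
     (hereditary_torsion_theory (perpT T) (SubT T) /\
      split_torsion_theory (perpT T) (SubT T))) /\
  (contravariantly_finite T -> (stable_balanced T <-> weakly_balanced T)) /\
  (enough_injectives C -> (stable_balanced T <-> injective_mono_hull_in_T T)).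
Proof.
split; first by split; [exact: one_two | exact: two_one].
split; first exact: two_three.
split.
  move=> Hcf; split; first exact: one_four.
  by move=> H4; apply: two_one; apply: four_two.
move=> HEI; split.
  by move=> H1; apply: two_five => //; apply: one_two.
by move=> H5; apply: two_one; apply: five_two.
Qed.

End TT.

Theorem proposition5p6 (C : PreCat) (HC : is_abelian C)
  (Hsubproj : forall (P X : Obj C) (m : Mor X P), projective P -> mono m -> projective X)
  (T : Obj C -> Prop)
  (HTproj : forall X, T X -> projective X)
  (HTsums : closed_finite_sums T)
  (HTsummands : closed_summands T)
  (HTcov : covariantly_finite T) :
  (stable_balanced T <-> closed_subobjects (perpT T)) /\
  (closed_subobjects (perpT T) <->
     (hereditary_torsion_theory (perpT T) (SubT T) /\
      split_torsion_theory (perpT T) (SubT T))) /\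
  (contravariantly_finite T -> (stable_balanced T <-> weakly_balanced T)) /\
  (enough_injectives C -> (stable_balanced T <-> injective_mono_hull_in_T T)).
Proof. exact: (main_sec HC Hsubproj HTproj HTsums HTsummands HTcov). Qed.
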